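(* Let $\mathcal{M},\mathcal{N}\subset\mathbb{R}^n$ be two manifolds that are $\mathcal{C}^k$-smooth ($k\geq 2$) around a point $\bar{x}\in\mathcal{M}\cap\mathcal{N}$, such that $\mathcal{M}\cap\mathcal{N}$ is a $\mathcal{C}^k$-smooth manifold around $\bar{x}$ and $\mathrm{T}_{\mathcal{M}\cap\mathcal{N}}(\bar{x})=\mathrm{T}_{\mathcal{M}}(\bar{x})\cap\mathrm{T}_{\mathcal{N}}(\bar{x})$. Let the parameters satisfy $\alpha\in(0,1]$, $\alpha_1,\alpha_2\in(0,2]$ and either (B1) $\alpha_1,\alpha_2\in(0,2)$, or (B2) $\alpha\in(0,1)$ with $\alpha_1\neq 2$ or $\alpha_2\neq 2$. Define $S_{\mathrm{T}(\bar{x})}\coloneqq(1-\alpha)I+\alpha\,\Pi^{\alpha_2}_{\mathrm{T}_{\mathcal{M}}(\bar{x})}\Pi^{\alpha_1}_{\mathrm{T}_{\mathcal{N}}(\bar{x})}$. Then \[ \mathrm{T}_{\mathcal{M}\cap\mathcal{N}}(\bar{x})=\mathrm{T}_{\mathcal{M}}(\bar{x})\cap\mathrm{T}_{\mathcal{N}}(\bar{x})=\mathrm{fix}\, S_{\mathrm{T}(\bar{x})} \] and \[ \Pi_{\mathrm{fix}\, S_{\mathrm{T}(\bar{x})}}=S_{\mathrm{T}(\bar{x})}^\infty , \] where $S^\infty\coloneqq\lim_{k\to\infty}S^k$.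
   Context: For a closed nonempty set $C$, $\Pi_C$ is the (unique) projection and $\Pi_C^{\alpha}\coloneqq(1-\alpha)I+\alpha\Pi_C$ is the relaxed projection. For a manifold $\mathcal{M}$ given locally as $\{x: F(x)=0\}$ with $F$ of class $\mathcal{C}^k$ with surjective derivative, the tangent space is $\mathrm{T}_{\mathcal{M}}(x)=\ker \mathrm{J}F(x)$. $\mathrm{fix}\,S\coloneqq\{x\mid Sx=x\}$. *)

(* Defs.v *)
From HB Require Import structures.
From mathcomp Require Import all_boot all_order all_algebra.
From mathcomp Require Import all_classical all_reals all_analysis.
Import Order.TTheory GRing.Theory Num.Theory.
Import numFieldNormedType.Exports.
Local Open Scope classical_set_scope.
Local Open Scope ring_scope.
Set Implicit Arguments. Unset Strict Implicit.

Fixpoint iter_der (R : realType) (n m : nat) (f : 'rV[R]_n -> 'rV[R]_m)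
  (vs : seq 'rV[R]_n) : 'rV[R]_n -> 'rV[R]_m :=
  if vs is v :: vs' then fun x => 'D_v (iter_der f vs') x else f.

Definition class_C (R : realType) (n m k : nat) (U : set 'rV[R]_n)
  (f : 'rV[R]_n -> 'rV[R]_m) : Prop :=
  (forall vs : seq 'rV[R]_n, (size vs < k)%N ->
     forall v x, U x -> derivable (iter_der f vs) x v) /\
  (forall vs : seq 'rV[R]_n, (size vs <= k)%N ->
     forall x, U x -> {for x, continuous (iter_der f vs)}).

Definition jac (R : realType) (n m : nat) (F : 'rV[R]_n -> 'rV[R]_m)
  (x : 'rV[R]_n) : 'rV[R]_n -> 'rV[R]_m := fun v => 'D_v F x.

Definition local_description (R : realType) (n k m : nat) (M : set 'rV[R]_n)
  (xbar : 'rV[R]_n) (U : set 'rV[R]_n) (F : 'rV[R]_n -> 'rV[R]_m) : Prop :=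
  [/\ open U, U xbar, class_C k U F,
      (forall x, U x -> forall w : 'rV[R]_m, exists v, jac F x v = w) &
      M `&` U = [set x | U x /\ F x = 0]].

Definition manifold_tangent (R : realType) (n k : nat) (M : set 'rV[R]_n)
  (xbar : 'rV[R]_n) (T : set 'rV[R]_n) : Prop :=
  exists (m : nat) (U : set 'rV[R]_n) (F : 'rV[R]_n -> 'rV[R]_m),
    local_description k M xbar U F /\ T = [set v | jac F xbar v = 0].

Definition enorm2 (R : realType) (n : nat) (x : 'rV[R]_n) : R :=
  (x *m x^T) 0 0.

Definition is_proj (R : realType) (n : nat) (C : set 'rV[R]_n)
  (x y : 'rV[R]_n) : Prop :=
  C y /\ forall z, C z -> enorm2 (x - y) <= enorm2 (x - z).

Definition eproj (R : realType) (n : nat) (C : set 'rV[R]_n)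
  (x : 'rV[R]_n) : 'rV[R]_n := xget 0 [set y | is_proj C x y].

Definition rproj (R : realType) (n : nat) (al : R) (C : set 'rV[R]_n)
  (x : 'rV[R]_n) : 'rV[R]_n := (1 - al) *: x + al *: eproj C x.

Definition S_op (R : realType) (n : nat) (al a1 a2 : R) (TM TN : set 'rV[R]_n)
  (x : 'rV[R]_n) : 'rV[R]_n :=
  (1 - al) *: x + al *: rproj a2 TM (rproj a1 TN x).

Definition fix_pts (R : realType) (n : nat) (S : 'rV[R]_n -> 'rV[R]_n)
  : set 'rV[R]_n := [set x | S x = x].

(* Main.v *)
Require Import Defs.
From HB Require Import structures.
From mathcomp Require Import all_boot all_order all_algebra.
From mathcomp Require Import all_classical all_reals all_analysis.
From mathcomp Require Import ring lra.
Import Order.TTheory GRing.Theory Num.Theory.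
Import numFieldNormedType.Exports.
Local Open Scope classical_set_scope.
Local Open Scope ring_scope.
Section LA.
Context {R : realType}.

Definition dotp {n} (u v : 'rV[R]_n) : R := (u *m v^T) 0 0.

Lemma enorm2E {n} (u : 'rV[R]_n) : enorm2 u = dotp u u.
Proof. by []. Qed.

Lemma dotpC {n} (u v : 'rV[R]_n) : dotp u v = dotp v u.
Proof.
rewrite /dotp -[in RHS](trmxK (v *m u^T)) trmx_mul trmxK.
by rewrite [in RHS]mxE.
Qed.

Lemma dotpDl {n} (u v w : 'rV[R]_n) : dotp (u + v) w = dotp u w + dotp v w.
Proof. by rewrite /dotp mulmxDl mxE. Qed.

Lemma dotpZl {n} a (u w : 'rV[R]_n) : dotp (a *: u) w = a * dotp u w.
Proof. by rewrite /dotp -scalemxAl mxE. Qed.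

Lemma dotpNl {n} (u w : 'rV[R]_n) : dotp (- u) w = - dotp u w.
Proof. by rewrite -scaleN1r dotpZl mulN1r. Qed.

Lemma dotpBl {n} (u v w : 'rV[R]_n) : dotp (u - v) w = dotp u w - dotp v w.
Proof. by rewrite dotpDl dotpNl. Qed.

Lemma dotpDr {n} (u v w : 'rV[R]_n) : dotp w (u + v) = dotp w u + dotp w v.
Proof. by rewrite dotpC dotpDl !(dotpC w). Qed.

Lemma dotpZr {n} a (u w : 'rV[R]_n) : dotp w (a *: u) = a * dotp w u.
Proof. by rewrite dotpC dotpZl dotpC. Qed.

Lemma dotpBr {n} (u v w : 'rV[R]_n) : dotp w (u - v) = dotp w u - dotp w v.
Proof. by rewrite dotpC dotpBl !(dotpC w). Qed.

Lemma dotp_sum {n} (u v : 'rV[R]_n) : dotp u v = \sum_i u 0 i * v 0 i.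
Proof. by rewrite /dotp mxE; apply: eq_bigr => i _; rewrite mxE. Qed.

Lemma enorm2_ge0 {n} (u : 'rV[R]_n) : 0 <= enorm2 u.
Proof.
by rewrite enorm2E dotp_sum; apply: sumr_ge0 => i _; rewrite -expr2 sqr_ge0.
Qed.

Lemma enorm2_eq0 {n} {u : 'rV[R]_n} : enorm2 u = 0 -> u = 0.
Proof.
rewrite enorm2E dotp_sum => /eqP; rewrite psumr_eq0; last first.
  by move=> i _; rewrite -expr2 sqr_ge0.
move=> /allP H; apply/rowP => j; rewrite mxE.
have := H j (mem_index_enum j); rewrite mulf_eq0 orbb => /eqP ->//.
Qed.

Lemma enorm2D {n} (u v : 'rV[R]_n) :
  enorm2 (u + v) = enorm2 u + 2 * dotp u v + enorm2 v.
Proof.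
rewrite !enorm2E dotpDl !dotpDr (dotpC v u); ring.
Qed.

Lemma enorm2B {n} (u v : 'rV[R]_n) :
  enorm2 (u - v) = enorm2 u - 2 * dotp u v + enorm2 v.
Proof.
rewrite !enorm2E dotpBl !dotpBr (dotpC v u); ring.
Qed.

Lemma enorm2Z {n} a (u : 'rV[R]_n) : enorm2 (a *: u) = a ^+ 2 * enorm2 u.
Proof. by rewrite !enorm2E dotpZl dotpZr mulrA expr2. Qed.

Lemma dotp_mulmx {n} (u v : 'rV[R]_n) (P : 'M[R]_n) :
  dotp (u *m P) v = dotp u (v *m P^T).
Proof. by rewrite /dotp trmx_mul trmxK mulmxA. Qed.

Lemma cauchy_schwarz {n} (u v : 'rV[R]_n) :
  dotp u v ^+ 2 <= enorm2 u * enorm2 v.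
Proof.
have [v0|vn0] := eqVneq v 0.
  by rewrite v0 /dotp trmx0 mulmx0 mxE expr0n /= mulr_ge0 ?enorm2_ge0.
have Nv : 0 < enorm2 v.
  rewrite lt_def enorm2_ge0 andbT; apply/eqP => /enorm2_eq0; exact/eqP.
set t := dotp u v / enorm2 v.
have := enorm2_ge0 (u - t *: v).
rewrite enorm2B enorm2Z dotpZr /t => H.
rewrite -subr_ge0.
have -> : enorm2 u * enorm2 v - dotp u v ^+ 2 =
   enorm2 v * (enorm2 u - 2 * (dotp u v / enorm2 v * dotp u v) +
     (dotp u v / enorm2 v) ^+ 2 * enorm2 v).
  field; exact: lt0r_neq0.
by rewrite mulr_ge0 // ltW.
Qed.

End LA.
Section LA2.
Context {R : realType}.

Definition ismproj {n} (P : 'M[R]_n) := P^T = P /\ P *m P = P.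

Lemma dotp_proj {n} (P : 'M[R]_n) (x y : 'rV[R]_n) : ismproj P ->
  dotp (x - x *m P) (y *m P) = 0.
Proof.
move=> [PT PP]; rewrite dotpC dotp_mulmx PT mulmxBl -mulmxA PP subrr.
by rewrite /dotp trmx0 mulmx0 mxE.
Qed.

Lemma eproj_mx {n} (P : 'M[R]_n) (x : 'rV[R]_n) : ismproj P ->
  eproj [set v | v *m P = v] x = x *m P.
Proof.
move=> hP; have [PT PP] := hP.
have key z : z *m P = z ->
    enorm2 (x - z) = enorm2 (x - x *m P) + enorm2 (x *m P - z).
  move=> zP; have -> : x - z = (x - x *m P) + (x *m P - z) by rewrite addrA subrK.
  rewrite enorm2D.
  have -> : dotp (x - x *m P) (x *m P - z) = 0.
    by rewrite -zP -mulmxBl dotp_proj.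
  by rewrite mulr0 addr0.
have hp : is_proj [set v | v *m P = v] x (x *m P).
  split; first by rewrite /= -mulmxA PP.
  by move=> z /= zP; rewrite (key z zP) lerDl enorm2_ge0.
apply: xget_unique => // y [/= yP ymin].
have := ymin _ hp.1; rewrite (key y yP) => H.
have : enorm2 (x *m P - y) <= 0.
  by rewrite -(lerD2l (enorm2 (x - x *m P))) addr0.
move=> H2; apply/esym/eqP; rewrite -subr_eq0; apply/eqP/enorm2_eq0.
by apply/le_anti; rewrite H2 enorm2_ge0.
Qed.

Lemma unit_of_inj {n} (B : 'M[R]_n) :
  (forall u : 'rV[R]_n, u *m B = 0 -> u = 0) -> B \in unitmx.
Proof.
move=> H; rewrite -row_free_unit -kermx_eq0; apply/eqP/row_matrixP => i.
rewrite row0; apply: H; by rewrite -row_mul mulmx_ker row0.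
Qed.

Lemma mat_bound {n p} (M : 'M[R]_(n, p)) :
  exists K, 0 < K /\ forall v, enorm2 (v *m M) <= K * enorm2 v.
Proof.
exists (1 + \sum_j enorm2 (col j M)^T); split.
  by rewrite ltr_pwDl // sumr_ge0 // => j _; apply: enorm2_ge0.
move=> v; rewrite mulrDl mul1r.
apply: ler_wpDl; first exact: enorm2_ge0.
rewrite mulr_suml enorm2E dotp_sum; apply: ler_sum => j _.
have -> : (v *m M) 0 j = dotp v (col j M)^T.
  by rewrite dotp_sum mxE; apply: eq_bigr => i _; rewrite !mxE.
rewrite -expr2 mulrC; exact: cauchy_schwarz.
Qed.

End LA2.
Section LA3.
Context {R : realType}.

Lemma ker_proj {n m} (A : 'M[R]_(n, m)) :
  (forall w : 'rV[R]_m, exists v : 'rV[R]_n, v *m A = w) ->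
  exists P : 'M[R]_n, ismproj P /\ [set v : 'rV[R]_n | v *m A = 0] = [set v | v *m P = v].
Proof.
move=> surj.
have GU : (A^T *m A) \in unitmx.
  apply: unit_of_inj => u H.
  have H1 : enorm2 (u *m A^T) = 0.
    by rewrite enorm2E /dotp trmx_mul trmxK !mulmxA -(mulmxA u) H mul0mx mxE.
  have H2 := enorm2_eq0 H1.
  have [v vA] := surj u.
  apply: enorm2_eq0; rewrite enorm2E /dotp -{1}vA -mulmxA.
  have -> : A *m u^T = (u *m A^T)^T by rewrite trmx_mul trmxK.
  by rewrite H2 trmx0 mulmx0 mxE.
set G := invmx (A^T *m A).
have GT : G^T = G by rewrite /G trmx_inv trmx_mul trmxK.
have XX : (A *m G *m A^T) *m (A *m G *m A^T) = A *m G *m A^T.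
  by rewrite -!mulmxA (mulmxA A^T) (mulmxA G) mulVmx // mul1mx.
exists (1%:M - A *m G *m A^T); split; first split.
- by rewrite linearB /= trmx1 !trmx_mul trmxK GT mulmxA.
- by rewrite mulmxBl mul1mx mulmxBr mulmx1 XX subrr subr0.
- rewrite predeqE => v /=; split.
    by move=> vA; rewrite mulmxBr mulmx1 !mulmxA vA !mul0mx subr0.
  rewrite mulmxBr mulmx1 => /eqP; rewrite subr_eq addrC -subr_eq subrr => /eqP H.
  have := congr1 (mulmx^~ A) H; rewrite mul0mx -!mulmxA mulVmx //.
  by rewrite mulmx1 => <-.
Qed.

End LA3.
Section LA4.
Context {R : realType}.

Definition Tm {n} (a : R) (Q : 'M[R]_n) : 'M[R]_n := (1 - a)%:M + a *: Q.

Lemma TmE {n} a (Q : 'M[R]_n) (x : 'rV[R]_n) : x *m Tm a Q = (1 - a) *: x + a *: (x *m Q).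
Proof. by rewrite /Tm mulmxDr mul_mx_scalar scalemxAr. Qed.

Lemma Tm_sub {n} a (Q : 'M[R]_n) (x : 'rV[R]_n) : x - x *m Tm a Q = a *: (x - x *m Q).
Proof.
by rewrite TmE scalerBl scale1r scalerBr opprD opprB addrA [x + _]addrC subrK.
Qed.

Lemma Tm_id {n} a (Q : 'M[R]_n) (x : 'rV[R]_n) : ismproj Q ->
  enorm2 (x *m Tm a Q) = enorm2 x - a * (2 - a) * enorm2 (x - x *m Q).
Proof.
move=> hQ; set p := x *m Q; set y := x - p.
have dy : dotp y p = 0 by apply: dotp_proj.
have xE : x = p + y by rewrite /y addrC subrK.
have -> : x *m Tm a Q = p + (1 - a) *: y.
  by rewrite TmE {1}xE scalerDr addrC addrA -scalerDl [a + _]addrC subrK scale1r.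
rewrite dotpC in dy; clearbody y p.
rewrite [in enorm2 x]xE !enorm2D enorm2Z dotpZr dy; ring.
Qed.

Lemma enorm2N {n} (u : 'rV[R]_n) : enorm2 (- u) = enorm2 u.
Proof. by rewrite -scaleN1r enorm2Z sqrrN expr1n mul1r. Qed.

Lemma enorm2_par {n} (u v : 'rV[R]_n) : enorm2 (u + v) <= 2 * enorm2 u + 2 * enorm2 v.
Proof.
have := enorm2_ge0 (u - v); rewrite enorm2B enorm2D => H.
rewrite -subr_ge0; apply: le_trans H _; rewrite le_eqVlt; apply/orP; left; apply/eqP; ring.
Qed.

Lemma Tm_fix {n} a (Q : 'M[R]_n) (x : 'rV[R]_n) : a != 0 -> x *m Tm a Q = x -> x *m Q = x.
Proof.
move=> a0 H; have := Tm_sub a Q x; rewrite H subrr => /esym/eqP.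
by rewrite scaler_eq0 (negbTE a0) /= subr_eq0 => /eqP.
Qed.

Lemma Tm_fixP {n} a (Q : 'M[R]_n) (x : 'rV[R]_n) : x *m Q = x -> x *m Tm a Q = x.
Proof. by move=> H; rewrite TmE H -scalerDl subrK scale1r. Qed.

End LA4.
Section LA5.
Context {R : realType}.

Definition Sm {n} (al a1 a2 : R) (P1 P2 : 'M[R]_n) : 'M[R]_n :=
  Tm al (Tm a1 P1 *m Tm a2 P2).

Lemma sub0_eq {n} {u v : 'rV[R]_n} : enorm2 (u - v) = 0 -> v = u.
Proof. by move=> /enorm2_eq0 /eqP; rewrite subr_eq0 => /eqP. Qed.

Lemma fixS {n} (al a1 a2 : R) (P1 P2 : 'M[R]_n) (x : 'rV[R]_n) :
  ismproj P1 -> ismproj P2 -> 0 < al -> 0 < a1 <= 2 -> 0 < a2 <= 2 ->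
  (a1 < 2 \/ a2 < 2) ->
  x *m Sm al a1 a2 P1 P2 = x <-> (x *m P1 = x /\ x *m P2 = x).
Proof.
move=> h1 h2 hal /andP[a1p a1l] /andP[a2p a2l] ha; split; last first.
  move=> [x1 x2]; apply: Tm_fixP; by rewrite mulmxA !Tm_fixP.
move=> /(Tm_fix _ _ _ (lt0r_neq0 hal)); rewrite mulmxA; set y := x *m Tm a1 P1 => yx.
have e1 := Tm_id a1 P1 x h1; have e2 := Tm_id a2 P2 y h2.
rewrite -/y yx in e2.
have U1 := enorm2_ge0 (x - x *m P1); have U2 := enorm2_ge0 (y - y *m P2).
have k1 : 0 <= a1 * (2 - a1) by rewrite mulr_ge0 ?subr_ge0 // ltW.
have k2 : 0 <= a2 * (2 - a2) by rewrite mulr_ge0 ?subr_ge0 // ltW.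
case: ha => ha.
- have k1' : 0 < a1 * (2 - a1) by rewrite mulr_gt0 ?subr_gt0.
  have Z : enorm2 (x - x *m P1) = 0 by nra.
  have x1 := sub0_eq Z.
  have yE : y = x by rewrite /y Tm_fixP.
  split; first exact: x1.
  apply: (Tm_fix _ _ _ (lt0r_neq0 a2p)); by rewrite -{1}yE yx.
- have k2' : 0 < a2 * (2 - a2) by rewrite mulr_gt0 ?subr_gt0.
  have Z : enorm2 (y - y *m P2) = 0 by nra.
  have y2 := sub0_eq Z.
  have yE : y = x by rewrite -yx Tm_fixP.
  split; last by rewrite -{2}yE -{1}yE.
  by apply: (Tm_fix _ _ _ (lt0r_neq0 a1p)); rewrite -/y.
Qed.

End LA5.
Section LA6.
Context {R : realType}.

Lemma contrS {n} (al a1 a2 : R) (P1 P2 : 'M[R]_n) :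
  ismproj P1 -> ismproj P2 -> 0 < al <= 1 -> 0 < a1 <= 2 -> 0 < a2 <= 2 ->
  (al < 1 \/ (a1 < 2 /\ a2 < 2)) ->
  exists c, 0 < c /\ forall x : 'rV[R]_n,
    enorm2 (x *m Sm al a1 a2 P1 P2) <= enorm2 x - c * enorm2 (x - x *m Sm al a1 a2 P1 P2).
Proof.
move=> h1 h2 /andP[alp all] /andP[a1p a1l] /andP[a2p a2l] ha.
have k1 : 0 <= a1 * (2 - a1) by rewrite mulr_ge0 ?subr_ge0 // ltW.
have k2 : 0 <= a2 * (2 - a2) by rewrite mulr_ge0 ?subr_ge0 // ltW.
have base x : enorm2 (x *m (Tm a1 P1 *m Tm a2 P2)) =
   enorm2 x - a1 * (2 - a1) * enorm2 (x - x *m P1)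
   - a2 * (2 - a2) * enorm2 (x *m Tm a1 P1 - x *m Tm a1 P1 *m P2).
  by rewrite mulmxA Tm_id // Tm_id.
have [alt1|alge1] := ltP al 1.
- exists ((1 - al) / al); split; first by rewrite divr_gt0 // subr_gt0.
  move=> x; set z := x *m (Tm a1 P1 *m Tm a2 P2).
  have Nz : enorm2 z <= enorm2 x.
    rewrite /z base -addrA -opprD gerBl.
    by apply: addr_ge0; apply: mulr_ge0 => //; apply: enorm2_ge0.
  have sE : x - x *m Sm al a1 a2 P1 P2 = al *: (x - z) by rewrite /Sm Tm_sub.
  have sE' : x *m Sm al a1 a2 P1 P2 = x - al *: (x - z).
    by rewrite -sE opprB addrC subrK.
  have zE : z = x - (x - z) by rewrite opprB addrC subrK.
  rewrite sE sE' enorm2Z enorm2B dotpZr.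
  move: Nz; rewrite [in enorm2 z]zE enorm2B.
  have := enorm2_ge0 (x - z).
  set w := enorm2 (x - z); set d := dotp x (x - z); set N := enorm2 x.
  move=> w0 H.
  have -> : (1 - al) / al * (al ^+ 2 * w) = (1 - al) * al * w.
    by field; exact: lt0r_neq0.
  have H' : 0 <= 2 * d - w by lra.
  have := mulr_ge0 (ltW alp) H'.
  rewrite enorm2Z -/w; nra.
- have al1 : al = 1 by apply/le_anti; rewrite all alge1.
  have [a1t a2t] : a1 < 2 /\ a2 < 2.
    by case: ha => [h|//]; move: alge1; rewrite leNgt h.
  exists ((Num.min (a1 * (2 - a1)) (a2 * (2 - a2))) / 8); split.
    by rewrite divr_gt0 // lt_min !mulr_gt0 ?subr_gt0.
  move=> x.
  have SE (y : 'rV[R]_n) : y *m Sm al a1 a2 P1 P2 = y *m (Tm a1 P1 *m Tm a2 P2).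
    by rewrite /Sm TmE al1 subrr scale0r add0r scale1r.
  rewrite !SE base.
  set y := x *m Tm a1 P1.
  have dE : x - x *m (Tm a1 P1 *m Tm a2 P2) = a1 *: (x - x *m P1) + a2 *: (y - y *m P2).
    by rewrite -!Tm_sub mulmxA -/y addrA subrK.
  rewrite dE.
  have := enorm2_par (a1 *: (x - x *m P1)) (a2 *: (y - y *m P2)).
  rewrite !enorm2Z.
  set U1 := enorm2 (x - x *m P1); set U2 := enorm2 (y - y *m P2).
  set W := enorm2 (_ + _).
  have U1p : 0 <= U1 by apply: enorm2_ge0.
  have U2p : 0 <= U2 by apply: enorm2_ge0.
  set m := Num.min _ _.
  have m1 : m <= a1 * (2 - a1) by rewrite /m ge_min lexx.
  have m2 : m <= a2 * (2 - a2) by rewrite /m ge_min lexx orbT.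
  have mp : 0 <= m by rewrite /m le_min k1 k2.
  have a1s : a1 ^+ 2 <= 4 by rewrite expr2; nra.
  have a2s : a2 ^+ 2 <= 4 by rewrite expr2; nra.
  move=> HW.
  have : m / 8 * W <= m * (U1 + U2).
    apply: le_trans (ler_wpM2l (divr_ge0 mp (ler0n _ 8)) HW) _.
    rewrite -subr_ge0.
    have -> : m * (U1 + U2) - m / 8 * (2 * (a1 ^+ 2 * U1) + 2 * (a2 ^+ 2 * U2)) =
       m / 4 * ((4 - a1 ^+ 2) * U1 + (4 - a2 ^+ 2) * U2) by field.
    apply: mulr_ge0; first by rewrite divr_ge0.
    by apply: addr_ge0; apply: mulr_ge0; rewrite ?subr_ge0.
  nra.
Qed.

End LA6.
Section LA7.
Context {R : realType}.

Lemma norm_lt_of_enorm2 {n} (u : 'rV[R]_n) (e : R) : 0 < e ->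
  enorm2 u < e ^+ 2 -> `|u| < e.
Proof.
move=> e0 H; rewrite /Num.Def.normr /= mx_normrE; apply: bigmax_lt => // [[i j]] _ /=.
rewrite (ord1 i).
have : `|u 0 j| ^+ 2 <= enorm2 u.
  rewrite enorm2E dotp_sum (bigD1 j) //= real_normK ?num_real // -expr2 lerDl.
  by apply: sumr_ge0 => k _; rewrite -expr2 sqr_ge0.
move=> /le_lt_trans /(_ H).
rewrite !expr2 => H2; have := normr_ge0 (u 0 j); nra.
Qed.

Lemma iter_conv {n} (S P : 'M[R]_n) (c : R) :
  S *m P = P -> P *m P = P ->
  (forall x : 'rV[R]_n, x *m S = x -> x *m P = x) ->
  (forall x : 'rV[R]_n, (x *m P) *m S = x *m P) ->
  0 < c -> (forall x : 'rV[R]_n, enorm2 (x *m S) <= enorm2 x - c * enorm2 (x - x *m S)) ->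
  forall x : 'rV[R]_n, iter j (fun v => v *m S) x @[j --> \oo] --> x *m P.
Proof.
move=> hSP hPP hfix hPS c0 contr x.
set B : 'M[R]_n := 1%:M - S + P.
have BU : B \in unitmx.
  apply: unit_of_inj => u uB.
  have uP : u *m P = 0.
    have E : u *m B *m P = u *m P.
      by rewrite -mulmxA /B !mulmxDl mulNmx mul1mx hSP hPP subrr add0r.
    by rewrite -E uB mul0mx.
  move: uB; rewrite /B !mulmxDr mulmxN mulmx1 uP addr0 => /eqP.
  by rewrite subr_eq0 => /eqP/esym/hfix; rewrite uP.
have [K [K0 HK]] := mat_bound (invmx B).
set q := Num.max 0 (1 - c / K).
have q0 : 0 <= q by rewrite le_max lexx.
have q1 : q < 1 by rewrite gt_max ltr01 /= ltrBlDr ltrDl divr_gt0.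
have step w : w *m P = 0 -> enorm2 (w *m S) <= q * enorm2 w.
  move=> wP.
  have Hw : enorm2 w <= K * enorm2 (w - w *m S).
    have -> : w - w *m S = w *m B by rewrite /B !mulmxDr mulmxN mulmx1 wP addr0.
    by have := HK (w *m B); rewrite -mulmxA mulmxV // mulmx1.
  apply: (le_trans (contr w)).
  have Nw := enorm2_ge0 w.
  apply: (@le_trans _ _ ((1 - c / K) * enorm2 w)); last first.
    by apply: ler_wpM2r => //; rewrite le_max lexx orbT.
  have : c / K * enorm2 w <= c * enorm2 (w - w *m S).
    rewrite -mulrA ler_pM2l // ler_pdivrMl //.
  nra.
have iterP j w : w *m P = 0 -> iter j (fun v => v *m S) w *m P = 0 /\
    enorm2 (iter j (fun v => v *m S) w) <= q ^+ j * enorm2 w.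
  move=> wP; elim: j => [|j [IH1 IH2]] /=; first by rewrite expr0 mul1r.
  split; first by rewrite -mulmxA hSP.
  apply: (le_trans (step _ IH1)); rewrite exprS -mulrA ler_wpM2l //.
have iterB j : iter j (fun v => v *m S) x - x *m P = iter j (fun v => v *m S) (x - x *m P).
  elim: j => [|j IH] //=.
  by rewrite -{1}(hPS x) -mulmxBl IH.
set w := x - x *m P.
have wP : w *m P = 0 by rewrite /w mulmxBl -mulmxA hPP subrr.
apply/cvgrPdist_lt => e e0.
have qc : q ^+ j @[j --> \oo] --> (0 : R).
  by apply: cvg_expr; rewrite ger0_norm.
have t0 : 0 < e ^+ 2 / (enorm2 w + 1).
  by rewrite divr_gt0 ?exprn_gt0 // ltr_wpDl ?enorm2_ge0.
move/cvgrPdist_lt : qc => /(_ _ t0); apply: filterS => j.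
rewrite sub0r normrN ger0_norm ?exprn_ge0 // => Hj.
rewrite -normrN opprB iterB; apply: norm_lt_of_enorm2 => //.
have [_ H2] := iterP j w wP.
apply: (le_lt_trans H2).
have Nw := enorm2_ge0 w.
have : q ^+ j * enorm2 w <= e ^+ 2 / (enorm2 w + 1) * enorm2 w.
  by apply: ler_wpM2r => //; apply: ltW.
move/le_lt_trans; apply.
rewrite mulrAC ltr_pdivrMr ?ltr_wpDl // mulrDr mulr1 ltrDl exprn_gt0 //.
Qed.

End LA7.
Section AN1.
Context {R : realType}.

Lemma scale_dnbhs (c : R) : c != 0 -> (fun h : R => h * c) @ 0^' `=>` 0^'.
Proof.
move=> c0 A hA; rewrite /= /dnbhs /within /= in hA *.
change (\forall h \near nbhs (0:R), h != 0 -> A (h * c)).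
have : (fun h : R => h * c) @ (0 : R) --> (0 * c).
  exact: (@cvgMr_tmp R R (nbhs (0:R)) _ (fun h => h) 0 c cvg_id).
rewrite mul0r => H1.
have H2 := H1 [set s | s != 0 -> A s] hA.
near=> h => hn0.
suff: h * c != 0 -> A (h * c) by apply; rewrite mulf_neq0.
near: h; exact: H2.
Unshelve. all: by end_near.
Qed.

Lemma Dscale {n m} (F : 'rV[R]_n -> 'rV[R]_m) x v (c : R) :
  derivable F x v -> 'D_(c *: v) F x = c *: 'D_v F x.
Proof.
move=> dF; have [->|c0] := eqVneq c 0; first by rewrite !scale0r derive0.
apply: cvg_lim => //.
have D : (fun h : R => h^-1 *: (F (h *: v + x) - F x)) @ 0^' --> 'D_v F x := dF.
have E : (fun h : R => h^-1 *: ((F \o shift x) (h *: (c *: v)) - F x)) =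
         (fun h : R => c *: ((fun s : R => s^-1 *: (F (s *: v + x) - F x)) (h * c))).
  apply/funext => h /=; rewrite scalerA scalerA invfM mulrA (mulrC c) mulrK //.
  by rewrite unitfE.
rewrite E; apply: cvgZl_tmp.
have K := cvg_comp _ _ (scale_dnbhs c c0) D.
exact: K.
Qed.

End AN1.
Section AN2.
Context {R : realType}.

Lemma mx_entry_le {m n} (M : 'M[R]_(m, n)) i j : `|M i j| <= `|M|.
Proof.
rewrite [in leRHS]/Num.Def.normr /= mx_normrE.
exact: (le_bigmax _ (fun ij : 'I_m * 'I_n => `|M ij.1 ij.2|) (i, j)).
Qed.

Lemma mx_norm_le {m n} (M : 'M[R]_(m, n)) (e : R) : 0 <= e ->
  (forall i j, `|M i j| <= e) -> `|M| <= e.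
Proof.
move=> e0 H; rewrite /Num.Def.normr /= mx_normrE.
by apply: bigmax_le => // -[i j] _; apply: H.
Qed.

Lemma D1_line {n m} (F : 'rV[R]_n -> 'rV[R]_m) (p v : 'rV[R]_n) (j : 'I_m) (s : R) :
  derivable F (s *: v + p) v ->
  derivable (fun t : R => F (t *: v + p) 0 j) s 1 /\
  'D_1 (fun t : R => F (t *: v + p) 0 j) s = 'D_v F (s *: v + p) 0 j.
Proof.
move=> dF.
set G := fun t : R => F (t *: v + p).
have E : (fun h : R => h^-1 *: ((G \o shift s) (h *: 1) - G s)) =
         (fun h : R => h^-1 *: ((F \o shift (s *: v + p)) (h *: v) - F (s *: v + p))).
  apply/funext => h /=; rewrite /G /= [h *: 1]mulr1 scalerDl addrA.
  by [].
have dG : derivable G s 1 by rewrite /derivable E.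
have DG : 'D_1 G s = 'D_v F (s *: v + p) by rewrite /derive E.
split; first by move/derivable_mxP : dG => /(_ 0 j).
by rewrite -DG (derive_mx dG) mxE.
Qed.

End AN2.
Section AN3.
Context {R : realType}.

Lemma MVT_any (g : R -> R) (h : R) :
  (forall s, `|s| <= `|h| -> derivable g s 1) ->
  exists c, `|c| <= `|h| /\ g h - g 0 = 'D_1 g c * h.
Proof.
move=> dg; have [h0|h0] := leP 0 h.
- have [||c] := @MVT_segment R g (fun s => 'D_1 g s) 0 h h0.
  + move=> s; rewrite in_itv /= => /andP[s0 sh]; apply: derivableP; apply: dg.
    by rewrite !ger0_norm // ?ltW.
  + apply: derivable_within_continuous => s; rewrite in_itv /= => /andP[s0 sh].
    by apply: dg; rewrite !ger0_norm.
  rewrite in_itv /= => /andP[c0 ch] E; exists c; split.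
    by rewrite !ger0_norm.
  by rewrite E subr0.
- have h0' : h <= 0 by apply: ltW.
  have [||c] := @MVT_segment R g (fun s => 'D_1 g s) h 0 h0'.
  + move=> s; rewrite in_itv /= => /andP[s0 sh]; apply: derivableP; apply: dg.
    by rewrite !ler0_norm ?lerN2 ?ltW.
  + apply: derivable_within_continuous => s; rewrite in_itv /= => /andP[s0 sh].
    by apply: dg; rewrite !ler0_norm ?lerN2.
  rewrite in_itv /= => /andP[c0 ch] E; exists c; split.
    by rewrite !ler0_norm ?lerN2.
  by rewrite -opprB E sub0r mulrN opprK.
Qed.

End AN3.
Section AN4.
Context {R : realType}.

Lemma Dadd {n m} (F : 'rV[R]_n -> 'rV[R]_m) (U : set 'rV[R]_n) (x u v : 'rV[R]_n) :
  open U -> U x -> (forall y, U y -> forall w, derivable F y w) ->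
  {for x, continuous (fun y => 'D_v F y)} ->
  'D_(u + v) F x = 'D_u F x + 'D_v F x.
Proof.
move=> oU Ux dF cD.
apply: cvg_lim => //.
set a := fun h : R => h^-1 *: (F (h *: v + (h *: u + x)) - F (h *: u + x)).
set b := fun h : R => h^-1 *: (F (h *: u + x) - F x).
have E : (fun h : R => h^-1 *: ((F \o shift x) (h *: (u + v)) - F x)) = a \+ b.
  apply/funext => h /=; rewrite /a /b -scalerDr addrA subrK.
  by rewrite [h *: (u + v)]scalerDr [h *: u + h *: v]addrC -addrA.
have Hb : b @ 0^' --> 'D_u F x := dF x Ux u.
suff Ha : a @ 0^' --> 'D_v F x by rewrite E addrC; exact: (cvgD Ha Hb).
apply/cvgrPdist_le => e e0.
have nU : nbhs x U by apply: open_nbhs_nbhs.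
move/cvgrPdist_le : cD => /(_ e e0) nC.
have : \forall y \near x, U y /\ `|'D_v F x - 'D_v F y| <= e.
  by near=> y; split; near: y.
move=> /nbhs_normP [r /= r0 Hr].
set K := `|u| + `|v| + 1.
have K0 : 0 < K by rewrite /K ltr_wpDl ?addr_ge0.
near=> h.
have hK : `|h| < r / K by near: h; apply: dnbhs0_lt; rewrite divr_gt0.
have hn0 : h != 0 by near: h; exact: nbhs_dnbhs_neq.
have pts s : `|s| <= `|h| ->
    U (s *: v + (h *: u + x)) /\ `|'D_v F x - 'D_v F (s *: v + (h *: u + x))| <= e.
  move=> sh; apply: Hr; rewrite /ball_ /= addrA opprD addrCA subrr addr0.
  rewrite normrN; apply: (le_lt_trans (ler_normD _ _)); rewrite !normrZ.
  apply: (@le_lt_trans _ _ (`|h| * K)); last by rewrite -ltr_pdivlMr.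
  rewrite /K mulrDr mulr1 mulrDr addrC; apply: ler_wpDr; first exact: normr_ge0.
  by rewrite lerD // ?ler_wpM2r // mulrC.
apply: mx_norm_le; first exact: ltW.
move=> i j; rewrite (ord1 i).
set g := fun t : R => F (t *: v + (h *: u + x)) 0 j.
have [c [ch gE]] : exists c, `|c| <= `|h| /\ g h - g 0 = 'D_1 g c * h.
  apply: MVT_any => s sh.
  exact: (D1_line _ _ _ _ _ (dF _ (pts s sh).1 v)).1.
have Dc := (D1_line _ _ _ j _ (dF _ (pts c ch).1 v)).2.
have aE : a h 0 j = 'D_1 g c.
  rewrite /a mxE [X in _ * X]mxE [X in _ * (_ + X)]mxE.
  have -> : F (h *: u + x) 0 j = g 0 by rewrite /g scale0r add0r.
  by rewrite gE mulrCA mulVf ?mulr1.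
rewrite [X in `|X|]mxE [X in `|_ + X|]mxE aE Dc.
have := mx_entry_le ('D_v F x - 'D_v F (c *: v + (h *: u + x))) 0 j.
rewrite !mxE => H.
exact: le_trans H (pts c ch).2.
Unshelve. all: by end_near.
Qed.

End AN4.
Section AN5.
Context {R : realType}.

Lemma tangent_proj {n} {k : nat} {M : set 'rV[R]_n} {xbar : 'rV[R]_n} {T : set 'rV[R]_n} :
  (2 <= k)%N -> manifold_tangent k M xbar T ->
  exists P : 'M[R]_n, ismproj P /\ T = [set v | v *m P = v].
Proof.
move=> k2 [m [U [F [[oU Ux [hder hcont] hsurj _] ->]]]].
have dF y : U y -> forall w, derivable F y w.
  by move=> Uy w; apply: (hder [::]) => //; apply: leq_trans k2.
have cont w : {for xbar, continuous (fun y => 'D_w F y)}.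
  by apply: (hcont [:: w]) => //; apply: leq_trans k2.
set J := fun w : 'rV[R]_n => 'D_w F xbar.
have Jadd : {morph J : u v / u + v >-> u + v}.
  by move=> u v; rewrite /J (Dadd F U xbar u v oU Ux dF (cont v)).
have J0 : J 0 = 0 by rewrite /J derive0.
set A := \matrix_(i < n, j < m) (J (delta_mx 0 i)) 0 j.
have JA v : J v = v *m A.
  rewrite {1}(row_sum_delta v) (big_morph J Jadd J0).
  apply/rowP => j; rewrite summxE mxE; apply: eq_bigr => i _.
  by rewrite /J Dscale ?mxE //; apply: dF.
have surj : forall w : 'rV[R]_m, exists v : 'rV[R]_n, v *m A = w.
  by move=> w; have [v Hv] := hsurj xbar Ux w; exists v; rewrite -JA.
have [P [hP PE]] := ker_proj A surj.
exists P; split => //; rewrite -PE predeqE => v /=.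
by rewrite -JA.
Qed.

End AN5.
Section MAIN.
Context {R : realType}.

Lemma mx_ext {n} (A B : 'M[R]_n) : (forall x : 'rV[R]_n, x *m A = x *m B) -> A = B.
Proof.
move=> H; apply/row_matrixP => i; have := H (row i 1%:M).
by rewrite -!row_mul !mul1mx.
Qed.

Lemma TmP {n} (a : R) (Q P : 'M[R]_n) : Q *m P = P -> Tm a Q *m P = P.
Proof.
by move=> QP; rewrite /Tm mulmxDl mul_scalar_mx -scalemxAl QP -scalerDl subrK scale1r.
Qed.

End MAIN.

Theorem proposition3 (R : realType) (n k : nat) (M N : set 'rV[R]_n)
  (xbar : 'rV[R]_n) (TM TN TMN : set 'rV[R]_n) (al a1 a2 : R) :
  (2 <= k)%N -> M xbar -> N xbar ->
  manifold_tangent k M xbar TM ->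
  manifold_tangent k N xbar TN ->
  manifold_tangent k (M `&` N) xbar TMN ->
  TMN = TM `&` TN ->
  0 < al <= 1 -> 0 < a1 <= 2 -> 0 < a2 <= 2 ->
  ((a1 < 2 /\ a2 < 2) \/ (al < 1 /\ (a1 != 2 \/ a2 != 2))) ->
  [/\ TMN = TM `&` TN,
      TM `&` TN = fix_pts (S_op al a1 a2 TM TN) &
      forall x : 'rV[R]_n,
        iter j (S_op al a1 a2 TM TN) x @[j --> \oo] -->
          eproj (fix_pts (S_op al a1 a2 TM TN)) x].
Proof.
move=> hk _ _ hM hN hMN HT hal ha1 ha2 hB.
have [P2 [hP2 TME]] := tangent_proj hk hM.
have [P1 [hP1 TNE]] := tangent_proj hk hN.
have [P [hP TMNE]] := tangent_proj hk hMN.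
have hal' := hal; have ha1' := ha1; have ha2' := ha2.
move/andP: hal' => [alp all]; move/andP: ha1' => [a1p a1l]; move/andP: ha2' => [a2p a2l].
have h12 : a1 < 2 \/ a2 < 2.
  case: hB => [[-> _]|[_ [h|h]]]; [by left|left|right]; by rewrite lt_neqAle h.
have hcon : al < 1 \/ (a1 < 2 /\ a2 < 2) by case: hB => [h|[h _]]; [right|left].
set S := Sm al a1 a2 P1 P2.
have SopE : S_op al a1 a2 TM TN = fun x => x *m S.
  apply/funext => x; rewrite /S_op /rproj TME TNE !eproj_mx //.
  by rewrite /S /Sm TmE mulmxA !TmE.
have fixE : fix_pts (S_op al a1 a2 TM TN) = TM `&` TN.
  rewrite predeqE => x; rewrite /fix_pts SopE TME TNE /=.
  rewrite (fixS al a1 a2 P1 P2 x hP1 hP2 alp ha1 ha2 h12); tauto.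
have inTMN (x : 'rV[R]_n) : x *m P = x <-> (x *m P1 = x /\ x *m P2 = x).
  have : TMN x <-> (TM `&` TN) x by rewrite HT.
  by rewrite TMNE TME TNE /=; tauto.
split; [by [] | by rewrite fixE | ].
rewrite fixE -HT TMNE => x; rewrite eproj_mx // SopE.
have [c [c0 hc]] := contrS al a1 a2 P1 P2 hP1 hP2 hal ha1 ha2 hcon.
have [PT PP] := hP.
have PP2 : P *m P2 = P.
  by apply: mx_ext => y; rewrite mulmxA; apply: (proj2 (proj1 (inTMN _) _)); rewrite -mulmxA PP.
have PP1 : P *m P1 = P.
  by apply: mx_ext => y; rewrite mulmxA; apply: (proj1 (proj1 (inTMN _) _)); rewrite -mulmxA PP.
have sym Q : ismproj Q -> P *m Q = P -> Q *m P = P.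
  by move=> [QT _] H; have := congr1 trmx H; rewrite trmx_mul PT QT.
have SP : S *m P = P.
  by rewrite /S /Sm TmP // -mulmxA TmP ?TmP // sym.
apply: (iter_conv S P c SP PP _ _ c0 hc).
- by move=> y /(fixS al a1 a2 P1 P2 y hP1 hP2 alp ha1 ha2 h12) /inTMN.
- move=> y; apply/(fixS al a1 a2 P1 P2 _ hP1 hP2 alp ha1 ha2 h12)/inTMN; by rewrite -mulmxA PP.
Qed.
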